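(* Let $\alpha,\beta:[0,1]\to X$ be paths from $x_0$ to $x_1$ and let $A$ be a homotopy cut-set for $\alpha$ and $\beta$. (1) If $x_0\notin\mathbf{aw}(X)$, there is a homotopy cut-set $B\subseteq A$ for $\alpha,\beta$ in which $0$ is an isolated point. (2) If $x_1\notin\mathbf{aw}(X)$, there is a homotopy cut-set $B\subseteq A$ for $\alpha,\beta$ in which $1$ is an isolated point. (3) If $x_0,x_1\notin\mathbf{aw}(X)$, there is a homotopy cut-set $B\subseteq A$ for $\alpha,\beta$ in which both $0$ and $1$ are isolated points.
   Context: $\simeq$ is path-homotopy. A loop is trivial if path-homotopic to a constant loop. A sequence of loops $\alpha_n$ based at $x$ is a null-sequence if every neighborhood of $x$ contains $\alpha_n([0,1])$ for all but finitely many $n$. $\mathbf{aw}(X)=\{x\in X\mid \text{there is a null-sequence of non-trivial loops based at }x\}$. For paths $\alpha,\beta:[s,t]\to X$, a set $A\subseteq[s,t]$ is a homotopy cut-set for $\alpha,\beta$ if $A$ is closed, nowhere dense, contains $\{s,t\}$, $\alpha|_A=\beta|_A$, and $\alpha|_{[a,b]}\simeq\beta|_{[a,b]}$ for every component $(a,b)$ of $[s,t]\setminus A$. *)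

(* Defs.v *)
From Stdlib Require Import Reals.
Open Scope R_scope.

Record TopSpace := {
  carrier :> Type;
  is_open : (carrier -> Prop) -> Prop;
  open_full : is_open (fun _ => True);
  open_inter : forall U V, is_open U -> is_open V -> is_open (fun x => U x /\ V x);
  open_union : forall (F : (carrier -> Prop) -> Prop),
      (forall U, F U -> is_open U) -> is_open (fun x => exists U, F U /\ U x)
}.

Definition Icc (s t : R) (r : R) : Prop := s <= r <= t.

Definition continuous_on {X : TopSpace} (s t : R) (f : R -> X) : Prop :=
  forall r, Icc s t r -> forall U, is_open X U -> U (f r) ->
    exists d, d > 0 /\ forall r', Icc s t r' -> Rabs (r' - r) < d -> U (f r').

Definition continuous_on2 {X : TopSpace} (s t : R) (H : R -> R -> X) : Prop :=
  forall r u, Icc s t r -> Icc 0 1 u -> forall U, is_open X U -> U (H r u) ->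
    exists d, d > 0 /\ forall r' u', Icc s t r' -> Icc 0 1 u' ->
      Rabs (r' - r) < d -> Rabs (u' - u) < d -> U (H r' u').

Definition is_path {X : TopSpace} (s t : R) (f : R -> X) : Prop := continuous_on s t f.

Definition path_homotopic {X : TopSpace} (s t : R) (f g : R -> X) : Prop :=
  is_path s t f /\ is_path s t g /\
  exists H : R -> R -> X,
    continuous_on2 s t H /\
    (forall r, Icc s t r -> H r 0 = f r) /\
    (forall r, Icc s t r -> H r 1 = g r) /\
    (forall u, Icc 0 1 u -> H s u = f s) /\
    (forall u, Icc 0 1 u -> H t u = f t).

Definition is_loop {X : TopSpace} (x : X) (f : R -> X) : Prop :=
  is_path 0 1 f /\ f 0 = x /\ f 1 = x.

Definition trivial_loop {X : TopSpace} (x : X) (f : R -> X) : Prop :=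
  path_homotopic 0 1 f (fun _ => x).

Definition null_sequence {X : TopSpace} (x : X) (a : nat -> R -> X) : Prop :=
  (forall n, is_loop x (a n)) /\
  forall U, is_open X U -> U x ->
    exists N, forall n, (N <= n)%nat -> forall r, Icc 0 1 r -> U (a n r).

Definition aw (X : TopSpace) (x : X) : Prop :=
  exists a : nat -> R -> X, null_sequence x a /\ forall n, ~ trivial_loop x (a n).

Definition closed_R (A : R -> Prop) : Prop :=
  forall x, (forall e, e > 0 -> exists y, A y /\ Rabs (y - x) < e) -> A x.

Definition closure_R (A : R -> Prop) (x : R) : Prop :=
  forall e, e > 0 -> exists y, A y /\ Rabs (y - x) < e.

Definition interior_R (A : R -> Prop) (x : R) : Prop :=
  exists e, e > 0 /\ forall y, Rabs (y - x) < e -> A y.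

Definition nowhere_dense_R (A : R -> Prop) : Prop :=
  forall x, ~ interior_R (closure_R A) x.

(** (a,b) is a connected component of [s,t] \ A : a nonempty open interval
    contained in [s,t] \ A whose endpoints are not in [s,t] \ A (maximality). *)
Definition component_of_complement (s t : R) (A : R -> Prop) (a b : R) : Prop :=
  a < b /\
  (forall r, a < r < b -> Icc s t r /\ ~ A r) /\
  ~ (Icc s t a /\ ~ A a) /\
  ~ (Icc s t b /\ ~ A b).

Definition homotopy_cut_set {X : TopSpace} (s t : R) (f g : R -> X) (A : R -> Prop) : Prop :=
  (forall r, A r -> Icc s t r) /\
  closed_R A /\
  nowhere_dense_R A /\
  A s /\ A t /\
  (forall r, A r -> f r = g r) /\
  (forall a b, component_of_complement s t A a b -> path_homotopic a b f g).

Definition isolated_point (B : R -> Prop) (p : R) : Prop :=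
  B p /\ exists e, e > 0 /\ forall r, B r -> Rabs (r - p) < e -> r = p.

(* Main.v *)
Require Import Defs.
From Stdlib Require Import Reals Lra Psatz Classical IndefiniteDescription.
Open Scope R_scope.

Ltac brute := unfold Rmin, Rmax, Rabs;
  repeat match goal with
  | |- context [Rle_dec ?a ?b] => destruct (Rle_dec a b)
  | |- context [Rcase_abs ?a] => destruct (Rcase_abs a)
  | H : context [Rle_dec ?a ?b] |- _ => destruct (Rle_dec a b)
  end; lra.

Lemma cont_restrict {X : TopSpace} a b c d (f : R -> X) :
  continuous_on a b f -> a <= c -> d <= b -> continuous_on c d f.
Proof.
  intros Hf Hac Hdb r Hr U HU HUr.
  destruct (Hf r ltac:(unfold Icc in *; lra) U HU HUr) as [d0 [Hd0 H']].
  exists d0; split; auto. intros r' Hr' Hrr'. apply H'; unfold Icc in *; lra.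
Qed.

Lemma comp1 {X : TopSpace} a b c d K (f : R -> X) (phi : R -> R) :
  continuous_on a b f -> 0 < K -> (forall r, Icc c d r -> Icc a b (phi r)) ->
  (forall r r', Icc c d r -> Icc c d r' -> Rabs (phi r' - phi r) <= K * Rabs (r' - r)) ->
  continuous_on c d (fun r => f (phi r)).
Proof.
  intros Hf HK Hphi HL r Hr U HU HUr.
  destruct (Hf (phi r) (Hphi r Hr) U HU HUr) as [d0 [Hd0 H']].
  exists (d0 / K). split. apply Rdiv_lt_0_compat; auto.
  intros r' Hr' Hd. apply H'. apply Hphi; auto.
  specialize (HL r r' Hr Hr'). apply Rle_lt_trans with (1:=HL).
  assert (K * Rabs (r'-r) < K * (d0/K)) by (apply Rmult_lt_compat_l; auto).
  replace (K*(d0/K)) with d0 in H by (field; lra). exact H.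
Qed.

Lemma comp2 {X : TopSpace} s t K (H : R -> R -> X) (p q : R -> R -> R) :
  continuous_on2 0 1 H -> 0 < K ->
  (forall r u, Icc s t r -> Icc 0 1 u -> Icc 0 1 (p r u) /\ Icc 0 1 (q r u)) ->
  (forall r u r' u', Icc s t r -> Icc 0 1 u -> Icc s t r' -> Icc 0 1 u' ->
     Rabs (p r' u' - p r u) <= K * (Rabs (r'-r) + Rabs (u'-u)) /\
     Rabs (q r' u' - q r u) <= K * (Rabs (r'-r) + Rabs (u'-u))) ->
  continuous_on2 s t (fun r u => H (p r u) (q r u)).
Proof.
  intros HH HK Hphi HL r u Hr Hu U HU HUr.
  destruct (Hphi r u Hr Hu) as [Hp Hq].
  destruct (HH _ _ Hp Hq U HU HUr) as [d0 [Hd0 H']].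
  exists (d0 / (2*K)). split. apply Rdiv_lt_0_compat; lra.
  intros r' u' Hr' Hu' H1 H2.
  destruct (Hphi r' u' Hr' Hu') as [Hp' Hq'].
  destruct (HL r u r' u' Hr Hu Hr' Hu') as [L1 L2].
  assert (HS: K*(Rabs(r'-r)+Rabs(u'-u)) < K*(d0/(2*K) + d0/(2*K))) by (apply Rmult_lt_compat_l; lra).
  replace (K*(d0/(2*K)+d0/(2*K))) with d0 in HS by (field; lra).
  apply H'; auto; lra.
Qed.

Lemma paste {X : TopSpace} (f g : R -> X) :
  continuous_on 0 (1/2) f -> continuous_on (1/2) 1 g -> f (1/2) = g (1/2) ->
  continuous_on 0 1 (fun s => if Rle_dec s (1/2) then f s else g s).
Proof.
  intros Hf Hg Hfg r Hr U HU HUr. unfold Icc in *.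
  destruct (Rtotal_order r (1/2)) as [Hlt|[Heq|Hgt]].
  - destruct (Rle_dec r (1/2)) in HUr; [|lra].
    destruct (Hf r ltac:(unfold Icc; lra) U HU HUr) as [d [Hd H']].
    exists (Rmin d (1/2 - r)). split. apply Rmin_pos; lra.
    intros r' Hr' Hd'. pose proof (Rmin_l d (1/2-r)). pose proof (Rmin_r d (1/2-r)).
    apply Rabs_def2 in Hd'.
    destruct (Rle_dec r' (1/2)). apply H'. unfold Icc in *; lra. apply Rabs_def1; lra. lra.
  - subst r. destruct (Rle_dec (1/2) (1/2)) in HUr; [|lra].
    destruct (Hf (1/2) ltac:(unfold Icc; lra) U HU HUr) as [d1 [Hd1 H1]].
    rewrite Hfg in HUr.
    destruct (Hg (1/2) ltac:(unfold Icc; lra) U HU HUr) as [d2 [Hd2 H2]].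
    exists (Rmin d1 d2). split. apply Rmin_pos; lra.
    intros r' Hr' Hd'. pose proof (Rmin_l d1 d2). pose proof (Rmin_r d1 d2).
    apply Rabs_def2 in Hd'.
    destruct (Rle_dec r' (1/2)). apply H1. unfold Icc in *; lra. apply Rabs_def1; lra.
    apply H2. unfold Icc in *; lra. apply Rabs_def1; lra.
  - destruct (Rle_dec r (1/2)) in HUr; [lra|].
    destruct (Hg r ltac:(unfold Icc; lra) U HU HUr) as [d [Hd H']].
    exists (Rmin d (r - 1/2)). split. apply Rmin_pos; lra.
    intros r' Hr' Hd'. pose proof (Rmin_l d (r-1/2)). pose proof (Rmin_r d (r-1/2)).
    apply Rabs_def2 in Hd'.
    destruct (Rle_dec r' (1/2)). lra. apply H'. unfold Icc in *; lra. apply Rabs_def1; lra.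
Qed.

Definition vx (u : R) := Rmax 0 (Rmin 1 (3*u-1)).
Definition vy (u : R) := Rmin 1 (Rmin (3*u) (3-3*u)).

Lemma vx_lip u u' : Rabs (vx u' - vx u) <= 3 * Rabs (u' - u).
Proof. unfold vx; brute. Qed.
Lemma vy_lip u u' : Rabs (vy u' - vy u) <= 3 * Rabs (u' - u).
Proof. unfold vy; brute. Qed.
Lemma vx_range u : Icc 0 1 u -> Icc 0 1 (vx u).
Proof. unfold vx, Icc; intros; brute. Qed.
Lemma vy_range u : Icc 0 1 u -> Icc 0 1 (vy u).
Proof. unfold vy, Icc; intros; brute. Qed.
Lemma vx0 : vx 0 = 0. Proof. unfold vx; brute. Qed.
Lemma vy0 : vy 0 = 0. Proof. unfold vy; brute. Qed.
Lemma vx1 : vx 1 = 1. Proof. unfold vx; brute. Qed.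
Lemma vy1 : vy 1 = 0. Proof. unfold vy; brute. Qed.
Lemma vxa u : 0 <= u <= 1/3 -> vx u = 0. Proof. unfold vx; intros; brute. Qed.
Lemma vyb u : 1/3 <= u <= 2/3 -> vy u = 1. Proof. unfold vy; intros; brute. Qed.
Lemma vxc u : 2/3 <= u <= 1 -> vx u = 1. Proof. unfold vx; intros; brute. Qed.
Definition gam {X : TopSpace} (al be : R -> X) (e t : R) (s : R) : X :=
  if Rle_dec s (1/2) then al (e + 2*s*(t-e)) else be (e + 2*(1-s)*(t-e)).

Lemma gam_l {X : TopSpace} (al be : R -> X) e t s :
  s <= 1/2 -> gam al be e t s = al (e + 2*s*(t-e)).
Proof. intros; unfold gam; destruct Rle_dec; [reflexivity|lra]. Qed.

Lemma gam_r {X : TopSpace} (al be : R -> X) e t s :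
  al t = be t -> s >= 1/2 -> gam al be e t s = be (e + 2*(1-s)*(t-e)).
Proof.
  intros Ht Hs; unfold gam; destruct Rle_dec; [|reflexivity].
  assert (s = 1/2) by lra. subst s.
  replace (e + 2*(1/2)*(t-e)) with t by field.
  replace (e + 2*(1-1/2)*(t-e)) with t by field. exact Ht.
Qed.

Lemma lin_lip1 e t s s' : Icc 0 1 e -> Icc 0 1 t ->
  Rabs ((e + 2*s'*(t-e)) - (e + 2*s*(t-e))) <= 2 * Rabs (s' - s).
Proof.
  intros He Ht.
  replace ((e + 2*s'*(t-e)) - (e + 2*s*(t-e))) with ((s'-s)*(2*(t-e))) by ring.
  rewrite Rabs_mult.
  assert (Rabs (2*(t-e)) <= 2) by (unfold Rabs; destruct Rcase_abs; unfold Icc in *; lra).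
  pose proof (Rabs_pos (s'-s)). nra.
Qed.

Lemma lin_lip2 e t s s' : Icc 0 1 e -> Icc 0 1 t ->
  Rabs ((e + 2*(1-s')*(t-e)) - (e + 2*(1-s)*(t-e))) <= 2 * Rabs (s' - s).
Proof.
  intros He Ht.
  replace ((e + 2*(1-s')*(t-e)) - (e + 2*(1-s)*(t-e))) with ((s'-s)*(-2*(t-e))) by ring.
  rewrite Rabs_mult.
  assert (Rabs (-2*(t-e)) <= 2) by (unfold Rabs; destruct Rcase_abs; unfold Icc in *; lra).
  pose proof (Rabs_pos (s'-s)). nra.
Qed.

Lemma gam_cont {X : TopSpace} (al be : R -> X) e t :
  continuous_on 0 1 al -> continuous_on 0 1 be -> Icc 0 1 e -> Icc 0 1 t ->
  al t = be t -> continuous_on 0 1 (gam al be e t).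
Proof.
  intros Ha Hb He Ht Htt. unfold gam.
  apply (paste (fun s => al (e + 2*s*(t-e))) (fun s => be (e + 2*(1-s)*(t-e)))).
  - apply (comp1 0 1 0 (1/2) 2 al (fun s => e + 2*s*(t-e))); auto; try lra.
    intros r Hr; unfold Icc in *; nra.
    intros; apply lin_lip1; auto.
  - apply (comp1 0 1 (1/2) 1 2 be (fun s => e + 2*(1-s)*(t-e))); auto; try lra.
    intros r Hr; unfold Icc in *; nra.
    intros; apply lin_lip2; auto.
  - simpl. replace (e + 2*(1/2)*(t-e)) with t by field.
    replace (e + 2*(1-1/2)*(t-e)) with t by field. exact Htt.
Qed.

Definition lam (e t r : R) := (r - t) / (e - t).
Definition px (e t r u : R) := 1/2 + lam e t r * (vx u - 1/2).
Definition py (e t r u : R) := lam e t r * vy u.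

Lemma lam_range e t lo hi r : (lo = e /\ hi = t \/ lo = t /\ hi = e) -> lo < hi ->
  Icc lo hi r -> 0 <= lam e t r <= 1.
Proof.
  intros Hor Hlh Hr.
  assert (Hne : e - t <> 0) by (destruct Hor; lra).
  assert (HL : lam e t r * (e - t) = r - t) by (unfold lam; field; auto).
  set (L := lam e t r) in *. unfold Icc in Hr.
  destruct Hor as [[-> ->]|[-> ->]]; split; nra.
Qed.

Lemma lam_lip e t r r' : e - t <> 0 ->
  Rabs (lam e t r' - lam e t r) = Rabs (/(e-t)) * Rabs (r' - r).
Proof.
  intros Hne. unfold lam.
  replace ((r' - t) / (e - t) - (r - t) / (e - t)) with (/(e-t) * (r'-r)) by (field; auto).
  apply Rabs_mult.
Qed.

Lemma prod_lip a a' b b' : Rabs (a'*b' - a*b) <= Rabs a' * Rabs (b'-b) + Rabs (a'-a) * Rabs b.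
Proof.
  replace (a'*b' - a*b) with (a'*(b'-b) + (a'-a)*b) by ring.
  rewrite <- !Rabs_mult. apply Rabs_triang.
Qed.

Lemma bound_aux a' X Y Z D E c : 0<=a'<=1 -> 0<=X<=3*E -> 0<=Y<=c*D -> 0<=Z<=1 ->
  0<=c -> 0<=D -> 0<=E -> a'*X + Y*Z <= (3+c)*(D+E).
Proof. intros; nra. Qed.

Lemma TG {X : TopSpace} (al be : R -> X) e t lo hi :
  continuous_on 0 1 al -> continuous_on 0 1 be -> Icc 0 1 e -> Icc 0 1 t ->
  (lo = e /\ hi = t \/ lo = t /\ hi = e) -> lo < hi ->
  al e = be e -> al t = be t -> trivial_loop (al e) (gam al be e t) ->
  path_homotopic lo hi al be.
Proof.
  intros Ha Hb He Ht Hor Hlh Hee Htt Htr.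
  assert (Het : e - t <> 0) by (destruct Hor; lra).
  assert (Hlo : 0 <= lo /\ hi <= 1) by (destruct Hor as [[-> ->]|[-> ->]]; unfold Icc in *; lra).
  destruct Htr as [_ [_ [H [HH [H0 [H1 [Hs0 Hs1]]]]]]].
  split; [apply cont_restrict with 0 1; auto; lra|].
  split; [apply cont_restrict with 0 1; auto; lra|].
  assert (Hrange : forall r u, Icc lo hi r -> Icc 0 1 u ->
     Icc 0 1 (px e t r u) /\ Icc 0 1 (py e t r u)).
  { intros r u Hr Hu. pose proof (lam_range e t lo hi r Hor Hlh Hr).
    pose proof (vx_range u Hu). pose proof (vy_range u Hu).
    unfold px, py, Icc in *. split; split; nra. }
  assert (Ve : forall u, Icc 0 1 u -> H (px e t e u) (py e t e u) = al e).
  { intros u Hu. assert (Hl : lam e t e = 1) by (unfold lam; field; auto).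
    unfold px, py. rewrite Hl.
    replace (1/2 + 1 * (vx u - 1/2)) with (vx u) by ring.
    replace (1 * vy u) with (vy u) by ring.
    pose proof (vx_range u Hu). pose proof (vy_range u Hu). unfold Icc in Hu.
    destruct (Rle_dec u (1/3)).
    - rewrite vxa by lra. rewrite Hs0 by auto. rewrite gam_l by lra. f_equal; ring.
    - destruct (Rle_dec u (2/3)).
      + rewrite vyb by lra. rewrite H1 by auto. reflexivity.
      + rewrite vxc by lra. rewrite Hs1 by auto. rewrite gam_r by (auto; lra).
        rewrite Hee. f_equal; ring. }
  assert (Vt : forall u, Icc 0 1 u -> H (px e t t u) (py e t t u) = al t).
  { intros u Hu. assert (Hl : lam e t t = 0) by (unfold lam; field; auto).
    unfold px, py. rewrite Hl.
    replace (1/2 + 0 * (vx u - 1/2)) with (1/2) by ring.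
    replace (0 * vy u) with 0 by ring.
    rewrite H0 by (unfold Icc; lra). rewrite gam_l by lra. f_equal; field. }
  exists (fun r u => H (px e t r u) (py e t r u)).
  split.
  { apply (comp2 lo hi (3 + Rabs (/(e-t)))); auto.
    pose proof (Rabs_pos (/(e-t))); lra.
    intros r u r' u' Hr Hu Hr' Hu'.
    pose proof (lam_range e t lo hi r Hor Hlh Hr).
    pose proof (lam_range e t lo hi r' Hor Hlh Hr').
    pose proof (vx_range u Hu). pose proof (vy_range u Hu).
    pose proof (lam_lip e t r r' Het).
    pose proof (Rabs_pos (/(e-t))). pose proof (Rabs_pos (r'-r)). pose proof (Rabs_pos (u'-u)).
    unfold Icc in *.
    split.
    - unfold px.
      replace (1 / 2 + lam e t r' * (vx u' - 1 / 2) - (1 / 2 + lam e t r * (vx u - 1 / 2)))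
        with (lam e t r' * (vx u' - 1 / 2) - lam e t r * (vx u - 1 / 2)) by ring.
      eapply Rle_trans; [apply prod_lip|].
      replace (vx u' - 1/2 - (vx u - 1/2)) with (vx u' - vx u) by ring.
      rewrite (Rabs_pos_eq (lam e t r')) by lra.
      apply bound_aux; try lra.
      + split; [apply Rabs_pos|apply vx_lip].
      + split; [apply Rabs_pos|]. rewrite H6; lra.
      + split; [apply Rabs_pos|]. unfold Rabs; destruct Rcase_abs; lra.
    - unfold py.
      eapply Rle_trans; [apply prod_lip|].
      rewrite (Rabs_pos_eq (lam e t r')) by lra.
      apply bound_aux; try lra.
      + split; [apply Rabs_pos|apply vy_lip].
      + split; [apply Rabs_pos|]. rewrite H6; lra.
      + split; [apply Rabs_pos|]. unfold Rabs; destruct Rcase_abs; lra. }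
  split.
  { intros r Hr. pose proof (lam_range e t lo hi r Hor Hlh Hr).
    unfold px, py. rewrite vx0, vy0, Rmult_0_r.
    rewrite H0 by (unfold Icc; lra). rewrite gam_l by lra.
    f_equal. unfold lam. field. auto. }
  split.
  { intros r Hr. pose proof (lam_range e t lo hi r Hor Hlh Hr).
    unfold px, py. rewrite vx1, vy1, Rmult_0_r.
    rewrite H0 by (unfold Icc; lra). rewrite gam_r by (auto; lra).
    f_equal. unfold lam. field. auto. }
  destruct Hor as [[-> ->]|[-> ->]]; split; auto.
Qed.
Lemma Cut {X : TopSpace} (al be : R -> X) A lo hi :
  homotopy_cut_set 0 1 al be A -> A lo -> A hi -> lo < hi ->
  path_homotopic lo hi al be ->
  homotopy_cut_set 0 1 al be (fun r => A r /\ ~ (lo < r < hi)).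
Proof.
  intros [HI [HC [HN [H0 [H1 [Heq Hcomp]]]]]] Alo Ahi Hlh Hph.
  pose proof (HI lo Alo) as Ilo. pose proof (HI hi Ahi) as Ihi. unfold Icc in Ilo, Ihi.
  split. { intros r [Ar _]; auto. }
  split.
  { intros x Hx. split.
    - apply HC. intros e He. destruct (Hx e He) as [y [[Ay _] Hy]]. eauto.
    - intros [Hl Hh]. destruct (Hx (Rmin (x-lo) (hi-x))) as [y [[Ay Hny] Hy]].
      apply Rmin_pos; lra. apply Hny. apply Rabs_def2 in Hy.
      pose proof (Rmin_l (x-lo) (hi-x)). pose proof (Rmin_r (x-lo) (hi-x)). lra. }
  split.
  { intros x [e [He Hint]]. apply (HN x). exists e. split; auto.
    intros y Hy z Hz. destruct (Hint y Hy z Hz) as [w [[Aw _] Hw]]. eauto. }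
  split. { split; auto. lra. }
  split. { split; auto. lra. }
  split. { intros r [Ar _]; auto. }
  intros a b [Hab [Hin [Ha Hb]]].
  destruct (classic (exists r, a < r < b /\ lo < r < hi)) as [[r [Hr1 Hr2]]|Hno].
  - assert (a = lo).
    { destruct (Rtotal_order a lo) as [Hl|[Hl|Hl]]; auto; exfalso.
      - destruct (Hin lo ltac:(lra)) as [_ Hn]. apply Hn. split; auto. lra.
      - apply Ha. split. unfold Icc; lra. intros [_ Hn]; apply Hn; lra. }
    assert (b = hi).
    { destruct (Rtotal_order b hi) as [Hl|[Hl|Hl]]; auto; exfalso.
      - apply Hb. split. unfold Icc; lra. intros [_ Hn]; apply Hn; lra.
      - destruct (Hin hi ltac:(lra)) as [_ Hn]. apply Hn. split; auto. lra. }
    subst; auto.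
  - apply Hcomp. split; auto. split.
    + intros r Hr. destruct (Hin r Hr) as [Hr' HnB]. split; auto.
      intro Ar. apply HnB. split; auto. intro Hlr. apply Hno. exists r; auto.
    + split.
      * intros [Ia nA]. apply Ha. split; auto. intros [Aa _]; auto.
      * intros [Ia nA]. apply Hb. split; auto. intros [Aa _]; auto.
Qed.

Lemma iso0 (A : R -> Prop) hi : (forall r, A r -> Icc 0 1 r) -> A 0 -> 0 < hi ->
  isolated_point (fun r => A r /\ ~ (0 < r < hi)) 0.
Proof.
  intros HI A0 Hh. split. split; auto; lra.
  exists hi. split; auto. intros r [Ar Hn] Hr. rewrite Rminus_0_r in Hr.
  apply Rabs_def2 in Hr. destruct (HI r Ar).
  destruct (Req_dec r 0); auto. exfalso; apply Hn; split; lra.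
Qed.

Lemma iso1 (A : R -> Prop) lo : (forall r, A r -> Icc 0 1 r) -> A 1 -> lo < 1 ->
  isolated_point (fun r => A r /\ ~ (lo < r < 1)) 1.
Proof.
  intros HI A1 Hh. split. split; auto; lra.
  exists (1 - lo). split; [lra|]. intros r [Ar Hn] Hr.
  apply Rabs_def2 in Hr. destruct (HI r Ar).
  destruct (Req_dec r 1); auto. exfalso; apply Hn; split; lra.
Qed.

Lemma iso_transfer (A B : R -> Prop) p : isolated_point A p -> (forall r, B r -> A r) -> B p ->
  isolated_point B p.
Proof.
  intros [_ [e [He H]]] HS Bp. split; auto. exists e; split; auto.
Qed.

Lemma claim {X : TopSpace} (al be : R -> X) (C : R -> Prop) e :
  continuous_on 0 1 al -> continuous_on 0 1 be -> Icc 0 1 e -> al e = be e ->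
  (forall r, C r -> al r = be r) -> (forall r, C r -> Icc 0 1 r) -> ~ aw X (al e) ->
  (forall eps, eps > 0 -> exists r, C r /\ r <> e /\ Rabs (r - e) < eps) ->
  exists t, C t /\ t <> e /\ trivial_loop (al e) (gam al be e t).
Proof.
  intros Ha Hb He Hee HCeq HCI Hnaw Hseq.
  assert (Hs : forall n : nat, exists r, C r /\ r <> e /\ Rabs (r - e) < / (INR n + 1)).
  { intro n; apply Hseq; apply Rinv_0_lt_compat; pose proof (pos_INR n); lra. }
  set (tn := fun n => proj1_sig (constructive_indefinite_description _ (Hs n))).
  assert (Htn : forall n, C (tn n) /\ tn n <> e /\ Rabs (tn n - e) < / (INR n + 1)).
  { intro n. exact (proj2_sig (constructive_indefinite_description _ (Hs n))). }
  apply NNPP; intro Hno. apply Hnaw. exists (fun n => gam al be e (tn n)). split.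
  - split.
    + intro n. destruct (Htn n) as [Ct _]. pose proof (HCI _ Ct) as It.
      pose proof (HCeq _ Ct) as Eq.
      split. apply gam_cont; auto. split.
      * rewrite gam_l by lra. f_equal; ring.
      * rewrite gam_r by (auto; lra). rewrite Hee. f_equal; ring.
    + intros U HU HUx. destruct (Ha e He U HU HUx) as [d1 [Hd1 H1]].
      rewrite Hee in HUx. destruct (Hb e He U HU HUx) as [d2 [Hd2 H2]].
      destruct (archimed_cor1 (Rmin d1 d2) ltac:(apply Rmin_pos; auto)) as [N [HN HN0]].
      pose proof (Rmin_l d1 d2). pose proof (Rmin_r d1 d2).
      exists N. intros n Hn r Hr.
      destruct (Htn n) as [Ct [_ Hd]]. pose proof (HCI _ Ct) as It.
      pose proof (HCeq _ Ct) as Eq.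
      assert (Hinv : / (INR n + 1) <= / INR N).
      { apply Rinv_le_contravar. apply lt_0_INR; auto.
        apply le_INR in Hn. lra. }
      set (t := tn n) in *.
      assert (Hte : Rabs (t - e) < Rmin d1 d2) by lra.
      pose proof (Rabs_pos (t - e)).
      unfold Icc in *.
      destruct (Rle_dec r (1/2)).
      * rewrite gam_l by lra. apply H1. unfold Icc; nra.
        replace (e + 2*r*(t-e) - e) with ((2*r)*(t-e)) by ring.
        rewrite Rabs_mult. rewrite (Rabs_pos_eq (2*r)) by lra. nra.
      * rewrite gam_r by (auto; lra). apply H2. unfold Icc; nra.
        replace (e + 2*(1-r)*(t-e) - e) with ((2*(1-r))*(t-e)) by ring.
        rewrite Rabs_mult. rewrite (Rabs_pos_eq (2*(1-r))) by lra. nra.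
  - intros n Htriv. apply Hno. exists (tn n). destruct (Htn n) as [? [? ?]]; auto.
Qed.

Lemma end0 {X : TopSpace} (al be : R -> X) A :
  is_path 0 1 al -> is_path 0 1 be -> homotopy_cut_set 0 1 al be A -> ~ aw X (al 0) ->
  exists B, (forall r, B r -> A r) /\ homotopy_cut_set 0 1 al be B /\ isolated_point B 0.
Proof.
  intros Ha Hb HA Hnaw.
  destruct (classic (isolated_point A 0)) as [Hiso|Hniso].
  { exists A; auto. }
  pose proof HA as [HI [HC [HN [H0 [H1 [Heq Hcomp]]]]]].
  assert (Hseq : forall eps, eps > 0 -> exists r, A r /\ r <> 0 /\ Rabs (r - 0) < eps).
  { intros eps Heps. apply NNPP; intro Hn. apply Hniso. split; auto.
    exists eps; split; auto. intros r Ar Hr. destruct (Req_dec r 0); auto.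
    exfalso; apply Hn; exists r; auto. }
  destruct (claim al be A 0 Ha Hb ltac:(unfold Icc; lra) (Heq 0 H0) Heq HI Hnaw Hseq)
    as [t [At [Ht0 Htriv]]].
  pose proof (HI t At) as It. unfold Icc in It.
  assert (Htp : 0 < t) by lra.
  pose proof (TG al be 0 t 0 t Ha Hb ltac:(unfold Icc; lra) ltac:(unfold Icc; lra)
     ltac:(left; auto) Htp (Heq 0 H0) (Heq t At) Htriv) as Hph.
  exists (fun r => A r /\ ~ (0 < r < t)). split. { intros r [Ar _]; auto. }
  split. apply Cut; auto. apply iso0; auto.
Qed.

Lemma end1 {X : TopSpace} (al be : R -> X) A :
  is_path 0 1 al -> is_path 0 1 be -> homotopy_cut_set 0 1 al be A -> ~ aw X (al 1) ->
  exists B, (forall r, B r -> A r) /\ homotopy_cut_set 0 1 al be B /\ isolated_point B 1.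
Proof.
  intros Ha Hb HA Hnaw.
  destruct (classic (isolated_point A 1)) as [Hiso|Hniso].
  { exists A; auto. }
  pose proof HA as [HI [HC [HN [H0 [H1 [Heq Hcomp]]]]]].
  assert (Hseq : forall eps, eps > 0 -> exists r, A r /\ r <> 1 /\ Rabs (r - 1) < eps).
  { intros eps Heps. apply NNPP; intro Hn. apply Hniso. split; auto.
    exists eps; split; auto. intros r Ar Hr. destruct (Req_dec r 1); auto.
    exfalso; apply Hn; exists r; auto. }
  destruct (claim al be A 1 Ha Hb ltac:(unfold Icc; lra) (Heq 1 H1) Heq HI Hnaw Hseq)
    as [t [At [Ht0 Htriv]]].
  pose proof (HI t At) as It. unfold Icc in It.
  assert (Htp : t < 1) by lra.
  pose proof (TG al be 1 t t 1 Ha Hb ltac:(unfold Icc; lra) ltac:(unfold Icc; lra)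
     ltac:(right; auto) Htp (Heq 1 H1) (Heq t At) Htriv) as Hph.
  exists (fun r => A r /\ ~ (t < r < 1)). split. { intros r [Ar _]; auto. }
  split. apply Cut; auto. apply iso1; auto.
Qed.

Theorem mainTheorem12 (X : TopSpace) (x0 x1 : X) (alpha beta : R -> X)
  (A : R -> Prop) :
  is_path 0 1 alpha -> is_path 0 1 beta ->
  alpha 0 = x0 -> alpha 1 = x1 -> beta 0 = x0 -> beta 1 = x1 ->
  homotopy_cut_set 0 1 alpha beta A ->
  (~ aw X x0 -> exists B, (forall r, B r -> A r) /\
      homotopy_cut_set 0 1 alpha beta B /\ isolated_point B 0) /\
  (~ aw X x1 -> exists B, (forall r, B r -> A r) /\
      homotopy_cut_set 0 1 alpha beta B /\ isolated_point B 1) /\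
  (~ aw X x0 -> ~ aw X x1 -> exists B, (forall r, B r -> A r) /\
      homotopy_cut_set 0 1 alpha beta B /\ isolated_point B 0 /\ isolated_point B 1).
Proof.
  intros Ha Hb E0 E1 F0 F1 HA. subst x0 x1.
  split; [|split].
  - intro Hn. apply end0; auto.
  - intro Hn. apply end1; auto.
  - intros Hn0 Hn1.
    destruct (end0 alpha beta A Ha Hb HA Hn0) as [B1 [S1 [C1 I1]]].
    destruct (end1 alpha beta B1 Ha Hb C1 Hn1) as [B2 [S2 [C2 I2]]].
    exists B2. split. { intros r Br; auto. }
    split; auto. split; auto.
    apply (iso_transfer B1 B2); auto. destruct C2 as [_ [_ [_ [? _]]]]; auto.
Qed.
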